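(* Let $K\subset\mathbb{R}^m$ be a self-dual cone and $L\subset\mathbb{R}^m$ a proper cone. If $K$ is an $L$-isotone projection set and at least one of $\operatorname{int}(K)\cap L$ or $\operatorname{int}(K)\cap L^*$ is nonempty, then $K=A\mathbb{R}^m_+$ for some orthogonal $m\times m$ matrix $A$. Moreover, the only proper cones $L$ such that $\mathbb{R}^m_+$ is an $L$-isotone projection set are the orthants of the reference system, i.e. the cones $\{x\in\mathbb{R}^m:\varepsilon^i x^i\ge 0,\ i=1,\dots,m\}$ with $\varepsilon^i\in\{-1,1\}$.
   Context: $\mathbb{R}^m$ carries the standard inner product with a fixed Cartesian coordinate system, and $\mathbb{R}^m_+=\{x:x^i\ge 0,\ i=1,\dots,m\}$. A convex cone is a nonempty set $K$ with $K+K\subset K$, $tK\subset K$ for $t\ge0$; a proper cone is a closed convex cone that is pointed ($K\cap(-K)=\{0\}$) and generating ($K-K=\mathbb{R}^m$). The dual cone is $K^*=\{y:\langle x,y\rangle\ge0\ \forall x\in K\}$; $K$ is self-dual if $K=K^*$. For a cone $L$, $x\le_L y$ means $y-x\in L$. $P_D$ is the metric projection onto a nonempty closed convex set $D$; $D$ is an $L$-isotone projection set if $x\le_L y$ implies $P_Dx\le_L P_Dy$. *)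

(* Defs.v *)
(* R : realType, vectors of R^m are column vectors 'cV[R]_m,
   the coordinate system is the standard one, x^i = x i 0. *)
From HB Require Import structures.
From mathcomp Require Import all_boot all_order all_algebra.
From mathcomp Require Import all_classical all_reals all_analysis.
Set Implicit Arguments. Unset Strict Implicit. Unset Printing Implicit Defensive.
Import Order.TTheory GRing.Theory Num.Theory.
Local Open Scope classical_set_scope.
Local Open Scope ring_scope.
Import numFieldNormedType.Exports.

Section Cones.
Variables (R : realType) (m : nat).
Local Notation V := 'cV[R]_m.

Definition dotv (x y : V) : R := \sum_(i < m) x i 0 * y i 0.

Definition convex_cone (K : set V) : Prop :=
  K !=set0 /\
  (forall x y, K x -> K y -> K (x + y)) /\
  (forall (t : R) x, 0 <= t -> K x -> K (t *: x)).

Definition pointed (K : set V) : Prop := forall x, K x -> K (- x) -> x = 0.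
Definition generating (K : set V) : Prop :=
  forall z, exists x y, K x /\ K y /\ z = x - y.

Definition proper_cone (K : set V) : Prop :=
  convex_cone K /\ closed K /\ pointed K /\ generating K.

Definition dual_cone (K : set V) : set V :=
  [set y | forall x, K x -> 0 <= dotv x y].

Definition self_dual (K : set V) : Prop := K = dual_cone K.

Definition cle (L : set V) (x y : V) : Prop := L (y - x).

Definition is_proj (D : set V) (x p : V) : Prop :=
  D p /\ forall z, D z -> dotv (x - p) (x - p) <= dotv (x - z) (x - z).

Definition isotone_proj_set (L D : set V) : Prop :=
  D !=set0 /\ closed D /\ convex_set D /\
  forall x y px py, cle L x y -> is_proj D x px -> is_proj D y py -> cle L px py.

Definition nonneg_orthant : set V := [set x | forall i, 0 <= x i 0].

Definition is_orthant (L : set V) : Prop :=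
  exists eps : 'I_m -> R, (forall i, eps i = 1 \/ eps i = -1) /\
    L = [set x | forall i, 0 <= eps i * x i 0].

Definition orthogonal_mx (A : 'M[R]_m) : Prop := A *m A^T = 1%:M.

End Cones.

(* Main.v *)
Require Import Defs.
From HB Require Import structures.
From mathcomp Require Import all_boot all_order all_algebra.
From mathcomp Require Import all_classical all_reals all_analysis.
From mathcomp Require Import ring lra.
Import Order.TTheory GRing.Theory Num.Theory.
Local Open Scope classical_set_scope.
Local Open Scope ring_scope.
Import numFieldNormedType.Exports.
Ltac mxring := apply/matrixP => ? ?; rewrite !mxE; ring.
Section Dot.
Context {R : realType} {m : nat}.
Local Notation V := 'cV[R]_m.
Implicit Types x y z : V.

Lemma dotvC x y : dotv x y = dotv y x.
Proof. by apply: eq_bigr => i _; rewrite mulrC. Qed.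

Lemma dotvDl x y z : dotv (x + y) z = dotv x z + dotv y z.
Proof. by rewrite /dotv -big_split; apply: eq_bigr => i _; rewrite mxE mulrDl. Qed.

Lemma dotvDr x y z : dotv z (x + y) = dotv z x + dotv z y.
Proof. by rewrite dotvC dotvDl !(dotvC z). Qed.

Lemma dotvZl (a : R) x y : dotv (a *: x) y = a * dotv x y.
Proof. by rewrite /dotv mulr_sumr; apply: eq_bigr => i _; rewrite mxE mulrA. Qed.

Lemma dotvZr (a : R) x y : dotv y (a *: x) = a * dotv y x.
Proof. by rewrite dotvC dotvZl dotvC. Qed.

Lemma dotvNl x y : dotv (- x) y = - dotv x y.
Proof. by rewrite -scaleN1r dotvZl mulN1r. Qed.

Lemma dotvNr x y : dotv y (- x) = - dotv y x.
Proof. by rewrite -scaleN1r dotvZr mulN1r. Qed.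

Lemma dotvBl x y z : dotv (x - y) z = dotv x z - dotv y z.
Proof. by rewrite dotvDl dotvNl. Qed.

Lemma dotvBr x y z : dotv z (x - y) = dotv z x - dotv z y.
Proof. by rewrite dotvDr dotvNr. Qed.

Lemma dotv0l x : dotv 0 x = 0.
Proof. by rewrite -(scale0r (0 : V)) dotvZl mul0r. Qed.

Lemma dotv0r x : dotv x 0 = 0.
Proof. by rewrite dotvC dotv0l. Qed.

Lemma dotv_ge0 x : 0 <= dotv x x.
Proof. by apply: sumr_ge0 => i _; rewrite -expr2 sqr_ge0. Qed.

Lemma dotv_eq0 {x} : dotv x x = 0 -> x = 0.
Proof.
move=> /eqP; rewrite psumr_eq0; last by move=> i _; rewrite -expr2 sqr_ge0.
move=> /allP H; apply/matrixP => i j; rewrite (ord1 j) mxE.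
have := H i (mem_index_enum _); rewrite /= mulf_eq0 orbb => /eqP //.
Qed.

Lemma dotv_gt0 {x} : x <> 0 -> 0 < dotv x x.
Proof.
move=> x0; rewrite lt_neqAle dotv_ge0 andbT; apply/eqP => H.
by apply: x0; apply: dotv_eq0.
Qed.

End Dot.
Section ConeFacts.
Context {R : realType} {m : nat}.
Local Notation V := 'cV[R]_m.
Implicit Types x y z : V.
Context {K : set V}.
Hypothesis Kcc : convex_cone K.
Hypothesis Ksd : self_dual K.

Lemma K0 : K 0.
Proof. by case: Kcc => -[x Kx] [_ KZ]; rewrite -(scale0r x); apply: KZ. Qed.

Lemma KD {x y} : K x -> K y -> K (x + y).
Proof. by case: Kcc => _ [KD _]; apply: KD. Qed.

Lemma KZ {t : R} {x} : 0 <= t -> K x -> K (t *: x).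
Proof. by case: Kcc => _ [_ KZ]; apply: KZ. Qed.

Lemma Kdot {x y} : K x -> K y -> 0 <= dotv x y.
Proof. by move=> Kx; rewrite {1}Ksd => /(_ x Kx). Qed.

Lemma Kdual y : (forall x, K x -> 0 <= dotv x y) -> K y.
Proof. by move=> H; rewrite Ksd. Qed.

Lemma Kpointed {x} : K x -> K (- x) -> x = 0.
Proof.
move=> Kx Knx; apply: dotv_eq0; have := Kdot Kx Knx.
rewrite dotvNr oppr_ge0 => H; apply/eqP; rewrite eq_le H dotv_ge0 //.
Qed.

Lemma proj_char x p : K p -> K (p - x) -> dotv p (p - x) = 0 -> is_proj K x p.
Proof.
move=> Kp Kpx d0; split=> // z Kz.
have hz := Kdot Kpx Kz.
have -> : x - z = (p - z) - (p - x) by mxring.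
have -> : x - p = - (p - x) by mxring.
move: (p - x) Kpx d0 hz => w Kw dw hw.
have := dotv_ge0 (p - z); move: hw dw.
rewrite !(dotvBl, dotvBr, dotvNl, dotvNr) ?(dotvC z p) ?(dotvC w p) ?(dotvC w z).
lra.
Qed.

Lemma proj_props x p : is_proj K x p ->
  [/\ K p, K (p - x) & dotv p (p - x) = 0].
Proof.
move=> [Kp Hp].
have H1 : forall z, K z -> forall t : R, 0 <= t ->
    0 <= 2 * t * dotv (p - x) z + t ^+ 2 * dotv z z.
  move=> z Kz t t0; have := Hp (p + t *: z) (KD Kp (KZ t0 Kz)).
  have -> : x - (p + t *: z) = - (p - x) - t *: z by mxring.
  have -> : x - p = - (p - x) by mxring.
  move: (p - x) => w.
  rewrite !(dotvBl, dotvBr, dotvNl, dotvNr, dotvZl, dotvZr) (dotvC z w).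
  move=> H; nra.
have Kpx : K (p - x).
  apply: Kdual => z Kz; rewrite dotvC.
  have [//|lt0] := leP 0 (dotv (p - x) z).
  have zz := dotv_ge0 z.
  pose t := - dotv (p - x) z / (dotv z z + 1).
  have t0 : 0 <= t by rewrite /t divr_ge0 // ?oppr_ge0 ?ltW //; lra.
  have := H1 z Kz t t0.
  have e : t * (dotv z z + 1) = - dotv (p - x) z.
    by rewrite /t mulfVK //; apply/eqP => /eqP; lra.
  move=> H; exfalso; nra.
split=> //.
have g0 : 0 <= dotv p (p - x) by apply: Kdot.
apply/eqP; rewrite eq_le g0 andbT.
have H2 : forall t : R, 0 <= t -> t <= 1 ->
    0 <= - 2 * t * dotv (p - x) p + t ^+ 2 * dotv p p.
  move=> t t0 t1; have := Hp ((1 - t) *: p) (KZ _ Kp); rewrite subr_ge0 => /(_ t1).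
  have -> : x - (1 - t) *: p = - (p - x) + t *: p.
    by mxring.
  have -> : x - p = - (p - x) by mxring.
  move: (p - x) => w.
  rewrite !(dotvDl, dotvDr, dotvNl, dotvNr, dotvZl, dotvZr) (dotvC p w).
  move=> H; nra.
rewrite dotvC; have [//|lt0] := leP (dotv (p - x) p) 0.
have pp := dotv_ge0 p.
move: H2 lt0 pp; move: (dotv (p - x) p) (dotv p p) => a b H lt0 pp.
have ab : 0 < a + b by lra.
have [t [t0 [t1 e]]] : exists t, 0 <= t /\ t <= 1 /\ t * (a + b) = a.
  exists (a / (a + b)); split; first by rewrite divr_ge0 // ltW.
  split; first by rewrite ler_pdivrMr // mul1r; lra.
  by rewrite mulfVK //; apply/eqP => /eqP; lra.
have tp : 0 < t.
  rewrite lt_neqAle t0 andbT; apply/eqP => t0'; move: e; rewrite -t0' mul0r; lra.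
have := H t t0 t1 => H'.
have H'' : 0 <= - 2 * a + t * b.
  rewrite -(pmulr_rge0 _ tp); nra.
have hta : 0 <= t * a by rewrite mulr_ge0 // ltW.
move: e; rewrite mulrDr => e.
have : t * b = a - t * a by rewrite -{1}e; ring.
move=> e'; rewrite e' in H''; lra.
Qed.

Lemma proj_uniq x p q : is_proj K x p -> is_proj K x q -> p = q.
Proof.
move=> /proj_props [Kp Kpx dp] /proj_props [Kq Kqx dq].
have h1 := Kdot Kq Kpx; have h2 := Kdot Kp Kqx.
apply/eqP; rewrite -subr_eq0; apply/eqP; apply: dotv_eq0.
have -> : p - q = (p - x) - (q - x) by mxring.
have := dotv_ge0 ((p - x) - (q - x)).
move: h1 h2 dp dq.
rewrite !(dotvBl, dotvBr) ?(dotvC x p) ?(dotvC x q) ?(dotvC q p).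
lra.
Qed.

End ConeFacts.
Section Existence.
Context {R : realType} {m : nat}.
Local Notation V := 'cV[R]_m.

Lemma trmx_continuous a b : continuous (fun M : 'M[R]_(a, b) => M^T).
Proof.
move=> M A [P hP sPA]; exists (fun i j => P j i) => [i j|N HN]; first by have := hP j i; rewrite mxE.
by apply: sPA => i j; rewrite mxE; apply: HN.
Qed.

Lemma distf_continuous (x : V) : continuous (fun z : V => dotv (x - z) (x - z)).
Proof.
apply: continuous_big => [|i _ z]; first exact: add_continuous.
have hc : continuous (fun z0 : V => (x - z0) i 0).
  have -> : (fun z0 : V => (x - z0) i 0) = (fun z0 : V => x i 0 - z0 i 0).
    by apply: funext => z0; rewrite !mxE.
  move=> z0; apply: continuousB; [exact: cst_continuous | exact: coord_continuous].
exact: (continuousM (hc z) (hc z)).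
Qed.

Lemma proj_exists (K : set V) : closed K -> K 0 -> forall x, exists p, is_proj K x p.
Proof.
move=> Kcl K0 x.
pose f := fun z : V => dotv (x - z) (x - z).
pose c := f 0.
pose S := [set z | K z /\ f z <= c].
have Scl : closed S.
  have -> : S = K `&` f @^-1` [set y : R | y <= c] by [].
  apply: closedI => //; apply: (@preimage_closed _ _ f [set y : R | y <= c]).
    by move=> z _; apply: distf_continuous.
  exact: closed_le.
pose S' := [set r : 'rV[R]_m | S r^T].
have S'cl : closed S' by apply: preimage_closed => // r _; apply: trmx_continuous.
pose B := \sum_k `|x k 0| + 1 + c.
have Bb : forall z, S z -> forall i, `|z i 0| <= B.
  move=> z [_ fz] i.
  have h1 : `|x i 0| <= \sum_k `|x k 0|.
    by rewrite (bigD1 i) //= lerDl sumr_ge0.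
  have h2 : (x i 0 - z i 0) ^+ 2 <= c.
    apply: le_trans fz; rewrite /f /dotv (bigD1 i) //= !mxE -expr2 lerDl.
    by apply: sumr_ge0 => k _; rewrite -expr2 sqr_ge0.
  have h3 : `|x i 0 - z i 0| <= 1 + c.
    move: h2; rewrite expr2; move: (x i 0 - z i 0) => a h2.
    by rewrite ler_norml; apply/andP; split; nra.
  have : `|z i 0| <= `|x i 0| + `|x i 0 - z i 0|.
    by have := ler_normB (x i 0) (x i 0 - z i 0); rewrite opprB addrC subrK.
  rewrite /B; lra.
have S'b : [bounded r | r in S'].
  rewrite /bounded_near; near=> M => r Sr /=.
  have : `|r| <= B.
    have -> : `|r| = mx_norm r by []. 
    rewrite mx_normrE; apply: bigmax_le.
      by rewrite /B /c /f addr_ge0 ?dotv_ge0 // addr_ge0 // sumr_ge0.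
    by move=> [i j] _ /=; rewrite (ord1 i); have := Bb _ Sr j; rewrite mxE.
  move=> h; apply: le_trans h _; near: M; apply: nbhs_pinfty_ge; exact: num_real.
have Scomp : compact S.
  have -> : S = (fun r : 'rV[R]_m => r^T) @` S'.
    apply/seteqP; split => z.
      by move=> Sz; exists z^T; rewrite /S' /= trmxK.
    by move=> [r Sr <-].
  apply: continuous_compact; last exact: bounded_closed_compact.
  exact/continuous_subspaceT/trmx_continuous.
have S0 : S !=set0 by exists 0; split => //; rewrite /c.
have [p /set_mem Sp pmin] := compact_EVT_min S0 Scomp
  (continuous_subspaceT (@distf_continuous x)).
exists p; split; first by case: Sp.
move=> z Kz; have [fz|fz] := leP (f z) c.
  by apply: pmin; apply/mem_set.
apply: le_trans (ltW fz); have := pmin 0 (mem_set (conj K0 (lexx c))); done.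
Unshelve. all: by end_near.
Qed.

End Existence.
Section LinAlg.
Context {R : realType} {m : nat}.
Local Notation V := 'cV[R]_m.

Definition orthr (u v : V) : bool := dotv u v == 0.

Definition rowsmx (s : seq V) : 'M[R]_(size s, m) := \matrix_(i, j) (nth 0 s i) j 0.

Lemma rowsmx_dot (s : seq V) (i : 'I_(size s)) (n : V) :
  (rowsmx s *m n) i 0 = dotv (nth 0 s i) n.
Proof. by rewrite mxE; apply: eq_bigr => k _; rewrite mxE. Qed.

Lemma orth_family_size (s : seq V) :
  (forall v, v \in s -> v <> 0) -> pairwise orthr s -> (size s <= m)%N.
Proof.
move=> nz /(pairwiseP 0) po.
pose M := rowsmx s.
pose d := \row_(i < size s) dotv (nth 0 s i) (nth 0 s i).
have G : M *m M^T = diag_mx d.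
  apply/matrixP => i j; rewrite !mxE.
  have -> : \sum_k M i k * M^T k j = dotv (nth 0 s i) (nth 0 s j).
    by apply: eq_bigr => k _; rewrite !mxE.
  have [->|ij] := eqVneq i j; first by rewrite mulr1n.
  rewrite mulr0n; case: (ltngtP i j) => [lt|gt|/val_inj e]; last by rewrite e eqxx in ij.
  - by apply/eqP; apply: po => //; rewrite inE.
  - by rewrite dotvC; apply/eqP; apply: po => //; rewrite inE.
have U : M *m M^T \in unitmx.
  rewrite G unitmxE det_diag unitfE; apply/prodf_neq0 => i _; rewrite mxE.
  apply/eqP => /dotv_eq0; apply: nz; exact: mem_nth.
have := mxrankM_maxl M M^T; rewrite (mxrank_unit U) => h.
exact: leq_trans h (rank_leq_col M).
Qed.

Lemma orth_kernel {s : seq V} : (size s < m)%N ->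
  exists n : V, n <> 0 /\ forall v, v \in s -> dotv v n = 0.
Proof.
move=> lt.
pose M := rowsmx s.
pose Ker := kermx M^T.
have rk : (0 < \rank Ker)%N.
  rewrite mxrank_ker mxrank_tr subn_gt0.
  exact: leq_ltn_trans (rank_leq_row M) lt.
have [i ri] : exists i, row i Ker != 0.
  apply: contrapT => H; move: rk.
  have -> : Ker = 0.
    apply/row_matrixP => i; rewrite row0; apply/eqP; apply: contrapT => /negP h.
    by apply: H; exists i.
  by rewrite mxrank0.
exists (row i Ker)^T; split.
  by move=> h; move: ri; rewrite -[row i Ker]trmxK h trmx0 eqxx.
move=> v /(nthP 0) [j js <-].
have -> : j = Ordinal js by [].
rewrite -rowsmx_dot.
have -> : rowsmx s *m (row i Ker)^T = (row i Ker *m M^T)^T by rewrite trmx_mul trmxK.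
by rewrite -row_mul mulmx_ker row0 trmx0 mxE.
Qed.

End LinAlg.
Section IsoCone.
Context {R : realType} {m : nat}.
Local Notation V := 'cV[R]_m.
Implicit Types x y z : V.
Variable K : set V.
Hypothesis Kcc : convex_cone K.
Hypothesis Ksd : self_dual K.
Hypothesis Kcl : closed K.
Hypothesis Kiso : forall x y px py, K (y - x) -> is_proj K x px -> is_proj K y py ->
  K (py - px).

Lemma KD' {x y} : K x -> K y -> K (x + y). Proof. exact: KD. Qed.
Lemma KZ' {t : R} {x} : 0 <= t -> K x -> K (t *: x). Proof. exact: KZ. Qed.
Lemma K0' : K 0. Proof. exact: K0. Qed.
Lemma Kdot' {x y} : K x -> K y -> 0 <= dotv x y. Proof. exact: Kdot. Qed.
Lemma Kpointed' {x} : K x -> K (- x) -> x = 0. Proof. exact: Kpointed. Qed.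
Lemma projP {x p} : is_proj K x p -> [/\ K p, K (p - x) & dotv p (p - x) = 0].
Proof. exact: proj_props. Qed.
Lemma projU {x p q} : is_proj K x p -> is_proj K x q -> p = q.
Proof. exact: proj_uniq. Qed.
Lemma projC {x p} : K p -> K (p - x) -> dotv p (p - x) = 0 -> is_proj K x p.
Proof. exact: proj_char. Qed.

Definition PK x : V := xget 0 [set p | is_proj K x p].

Lemma PKP x : is_proj K x (PK x).
Proof. have [p hp] := proj_exists K Kcl K0' x. rewrite /PK. by apply: xgetPex; exists p. Qed.

Lemma PK_in x : K (PK x).
Proof. by case: (projP (PKP x)). Qed.

Lemma PK_sub x : K (PK x - x).
Proof. by case: (projP (PKP x)). Qed.

Lemma PK_orth x : dotv (PK x) (PK x - x) = 0.
Proof. by case: (projP (PKP x)). Qed.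

Lemma PK_iso {x y} : K (y - x) -> K (PK y - PK x).
Proof. by move=> h; exact: (Kiso _ _ _ _ h (PKP x) (PKP y)). Qed.

Lemma PK_id {k} : K k -> PK k = k.
Proof.
move=> Kk; apply: (projU (PKP k)); apply: projC => //.
  by rewrite subrr; apply: K0'.
by rewrite subrr dotv0r.
Qed.

Lemma PK_negK {k} : K k -> PK (- k) = 0.
Proof.
move=> Kk; apply: (projU (PKP (- k))); apply: projC => //; first exact: K0'.
  by rewrite sub0r opprK.
by rewrite dotv0l.
Qed.

Lemma PK_neg x : PK (- x) = PK x - x.
Proof.
apply: (projU (PKP (- x))); apply: projC.
- exact: PK_sub.
- by rewrite opprK subrK; apply: PK_in.
- by rewrite opprK subrK dotvC PK_orth.
Qed.

Lemma PK_le {x y} : K x -> K (x - y) -> K (x - PK y).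
Proof. by move=> Kx Kxy; rewrite -{1}(PK_id Kx); apply: PK_iso. Qed.

Definition ext e := [/\ K e, e <> 0 & forall c, K c -> K (e - c) -> exists s : R, c = s *: e].

Lemma Kdot_le {u v w} : K u -> K v -> K (w - v) -> dotv u v <= dotv u w.
Proof.
move=> Ku Kv Kwv; have := Kdot' Ku Kwv; rewrite dotvBr; lra.
Qed.

Lemma ext_alt {a b} : ext a -> K b ->
  dotv a b = 0 \/ exists2 s : R, 0 < s & K (b - s *: a).
Proof.
move=> [Ka a0 Ha] Kb.
pose q := a - PK (a - b).
have Kq : K q by apply: PK_le => //; rewrite opprB addrC subrK.
have Kaq : K (a - q) by rewrite /q opprB addrC subrK; apply: PK_in.
have Kbq : K (b - q).
  have -> : b - q = PK (a - b) - (a - b) by rewrite /q; mxring.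
  exact: PK_sub.
have [s qs] := Ha q Kq Kaq.
have [s0|s0] := eqVneq s 0.
  left; move: qs; rewrite s0 scale0r /q => /eqP; rewrite subr_eq0 => /eqP e.
  have := PK_orth (a - b); rewrite -e.
  by have -> : a - (a - b) = b by mxring.
right; have [sn|sp|se] := ltgtP s 0; last by rewrite se eqxx in s0.
  exfalso; apply: a0; apply: Kpointed' => //.
  have -> : - a = (- s^-1) *: q by rewrite qs scalerA mulNr mulVf ?scaleN1r //; lra.
  apply: KZ' => //; rewrite oppr_ge0 ltW // invr_lt0 //.
by exists s => //; rewrite -qs.
Qed.

Definition fam a (s : seq V) :=
  (forall v, v \in s -> [/\ K v, K (a - v) & v <> 0]) /\ pairwise orthr s.

Lemma fam_size a s : fam a s -> (size s <= m)%N.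
Proof.
move=> [H po]; apply: orth_family_size => // v vs; by case: (H v vs).
Qed.

Lemma ext_below_n n a : K a -> a <> 0 -> (forall s, fam a s -> (size s <= n)%N) ->
  exists e, ext e /\ K (a - e).
Proof.
elim: n a => [|n IH] a Ka a0 Hs.
  have : fam a [:: a].
    split; last by [].
    by move=> v; rewrite inE => /eqP ->; split => //; rewrite subrr; apply: K0'.
  by move=> /Hs.
case: (pselect (ext a)) => [ea|nea].
  by exists a; split => //; rewrite subrr; apply: K0'.
have [c [Kc Kac nc]] : exists c, [/\ K c, K (a - c) & forall s : R, c <> s *: a].
  apply: contrapT => H; apply: nea; split => // c Kc Kac.
  apply: contrapT => H2; apply: H; exists c; split => // s e.
  by apply: H2; exists s.
have aa := dotv_gt0 a0.
pose t := dotv c a / dotv a a.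
pose x := c - t *: a.
have xa : dotv x a = 0.
  rewrite /x dotvBl dotvZl /t mulfVK //; first by rewrite subrr.
  by rewrite gt_eqF.
have x0 : x <> 0.
  by move=> h; apply: (nc t); apply/eqP; rewrite -subr_eq0 -/x h.
have xx := dotv_gt0 x0.
have xc : dotv x c = dotv x x.
  have -> : c = x + t *: a by rewrite /x subrK.
  by rewrite dotvDr dotvZr xa mulr0 addr0 -/x.
have t0 : 0 <= t by rewrite /t divr_ge0 ?Kdot' // ltW.
pose b := PK x.
pose b' := PK (- x).
have b0 : b <> 0.
  move=> h; have : K (- x).
    by have := PK_in (- x); rewrite PK_neg -/b h sub0r.
  move=> Kmx; have := Kdot' Kmx Kc; rewrite dotvNl xc; lra.
have b'0 : b' <> 0.
  move=> h; have Kx : K x.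
    by have := PK_in x; rewrite -/b; have := PK_neg x; rewrite -/b' h => /eqP;
      rewrite eq_sym subr_eq0 => /eqP <-.
  have := Kdot' Kx Kac; rewrite dotvBr xa xc; lra.
have Kcb : K (c - b).
  apply: PK_le => //; have -> : c - x = t *: a by rewrite /x; mxring.
  exact: KZ'.
have Kab : K (a - b).
  have -> : a - b = (a - c) + (c - b) by mxring.
  exact: KD'.
have Ktb' : K (t *: a - b').
  apply: PK_le; first by apply: KZ'.
  by have -> : t *: a - - x = c by rewrite /x; mxring.
have tp : 0 < t.
  rewrite lt_neqAle t0 andbT; apply/eqP => t0'; apply: b'0.
  apply: Kpointed'; first exact: PK_in.
  by move: Ktb'; rewrite -t0' scale0r sub0r.
have bb' : dotv b b' = 0 by rewrite /b' PK_neg PK_orth.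
have Kb := PK_in x; rewrite -/b in Kb.
have Kb' := PK_in (- x); rewrite -/b' in Kb'.
have [e [ee Kbe]] : exists e, ext e /\ K (b - e).
  apply: (IH b Kb b0) => s [Hs1 Hs2].
  have : fam a ((t^-1 *: b') :: s).
    split.
      move=> v; rewrite inE => /orP [/eqP ->|vs].
        split.
        - by apply: KZ' => //; rewrite invr_ge0 ltW.
        - have -> : a - t^-1 *: b' = t^-1 *: (t *: a - b').
            by rewrite scalerBr scalerA mulVf ?scale1r // gt_eqF.
          by apply: KZ' => //; rewrite invr_ge0 ltW.
        - move=> /eqP; rewrite scaler_eq0 invr_eq0 gt_eqF //= => /eqP //.
      have [Kv Kbv v0] := Hs1 v vs; split => //.
      have -> : a - v = (a - b) + (b - v) by mxring.
      exact: KD'.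
    rewrite /= Hs2 andbT; apply/allP => v vs; rewrite /orthr dotvZl.
    have [Kv Kbv v0] := Hs1 v vs.
    have h1 := Kdot' Kb' Kv.
    have h2 := Kdot_le Kb' Kv Kbv.
    rewrite (dotvC b' b) bb' in h2.
    by rewrite mulf_eq0; apply/orP; right; rewrite eq_le h1 andbT.
  by move=> /Hs /=; rewrite ltnS.
exists e; split => //.
have -> : a - e = (a - b) + (b - e) by mxring.
exact: KD'.
Qed.


Lemma ext_below {a} : K a -> a <> 0 -> exists e, ext e /\ K (a - e).
Proof. by move=> Ka a0; apply: (@ext_below_n m a Ka a0) => s /fam_size. Qed.

Lemma ext_perp v n : ext v -> dotv v n = 0 -> dotv v (PK n) = 0 /\ dotv v (PK (- n)) = 0.
Proof.
move=> ev vn.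
have e1 : PK n = PK (- n) + n by rewrite PK_neg subrK.
have o : dotv (PK (- n)) (PK n) = 0 by rewrite PK_neg dotvC PK_orth.
have [Kv _ _] := ev.
have h : dotv v (PK n) = 0.
  case: (ext_alt ev (PK_in n)) => // -[s sp Ks].
  have := Kdot' (PK_in (- n)) Ks; rewrite dotvBr dotvZr o.
  have := Kdot' Kv (PK_in (- n)).
  rewrite e1 dotvDr vn addr0 (dotvC (PK (- n))) => h1 h2.
  apply/eqP; rewrite eq_le h1 andbT.
  rewrite -(pmulr_rle0 _ sp); lra.
split => //; move: h; rewrite e1 dotvDr vn addr0 //.
Qed.

Lemma extend s : (forall v, v \in s -> ext v) -> (size s < m)%N ->
  exists e, ext e /\ all (orthr e) s.
Proof.
move=> es lt; have [n [n0 np]] := orth_kernel lt.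
have hp : forall v, v \in s -> dotv v (PK n) = 0 /\ dotv v (PK (- n)) = 0.
  by move=> v vs; apply: ext_perp; [apply: es | apply: np].
have [p [Kp p0 pp]] : exists p, [/\ K p, p <> 0 & forall v, v \in s -> dotv v p = 0].
  case: (pselect (PK n = 0)) => h.
    exists (PK (- n)); split; [exact: PK_in | | by move=> v /hp []].
    by rewrite PK_neg h sub0r => /eqP; rewrite oppr_eq0 => /eqP.
  by exists (PK n); split; [exact: PK_in | | by move=> v /hp []].
have [e [ee Kpe]] := ext_below Kp p0.
exists e; split => //; apply/allP => v vs; rewrite /orthr.
have [Ke _ _] := ee; have [Kv _ _] := es v vs.
have h1 := Kdot' Ke Kv.
have h2 := Kdot_le Kv Ke Kpe; rewrite pp // in h2.
by rewrite eq_le h1 andbT dotvC.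
Qed.

Lemma ext_family : exists s, [/\ size s = m, (forall v, v \in s -> ext v) & pairwise orthr s].
Proof.
suff H : forall j, (j <= m)%N ->
    exists s, [/\ size s = j, (forall v, v \in s -> ext v) & pairwise orthr s].
  exact: H.
elim=> [|j IH] jm; first by exists [::].
have [s [sz es ps]] := IH (ltnW jm).
have [e [ee oe]] : exists e, ext e /\ all (orthr e) s by apply: extend => //; rewrite sz.
exists (e :: s); split => //=; first by rewrite sz.
  by move=> v; rewrite inE => /orP [/eqP ->|/es].
by rewrite oe.
Qed.

Lemma K_orthant : exists A : 'M[R]_m, orthogonal_mx A /\ K = (mulmx A) @` @nonneg_orthant R m.
Proof.
have [s [sz es ps]] := ext_family.
move/(pairwiseP 0): ps => ps.
pose d j := dotv (nth 0 s j) (nth 0 s j).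
have dpos : forall j : 'I_m, 0 < d j.
  move=> j; apply: dotv_gt0; have js : (j < size s)%N by rewrite sz.
  by have [_ h _] := es (nth 0 s j) (mem_nth 0 js).
pose A := \matrix_(i < m, j < m) ((nth 0 s j) i 0 / Num.sqrt (d j)).
have colK : forall j : 'I_m, K (\col_i A i j).
  move=> j; have -> : \col_i A i j = (Num.sqrt (d j))^-1 *: nth 0 s j.
    by apply/matrixP => i k; rewrite (ord1 k) !mxE mulrC.
  apply: KZ'; first by rewrite invr_ge0 sqrtr_ge0.
  have js : (j < size s)%N by rewrite sz.
  by have [h _ _] := es (nth 0 s j) (mem_nth 0 js).
have dotA : forall (y : V) j, \sum_i y i 0 * A i j = dotv y (\col_i A i j).
  by move=> y j; apply: eq_bigr => i _; rewrite !mxE.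
have AtA : A^T *m A = 1%:M.
  apply/matrixP => i j; rewrite !mxE.
  have -> : \sum_k A^T i k * A k j =
      dotv (nth 0 s i) (nth 0 s j) / (Num.sqrt (d i) * Num.sqrt (d j)).
    rewrite /dotv mulr_suml; apply: eq_bigr => k _; rewrite !mxE.
    by rewrite invfM; ring.
  have [->|ij] := eqVneq i j.
    rewrite mulr1n -expr2 sqr_sqrtr ?ltW // -/(d j) divff //; exact: lt0r_neq0.
  rewrite mulr0n; case: (ltngtP i j) => [lt|gt|/val_inj e]; last by rewrite e eqxx in ij.
  - have is' : (i : nat) \in gtn (size s) by rewrite inE sz.
    have js : (j : nat) \in gtn (size s) by rewrite inE sz.
    by have /eqP -> := ps i j is' js lt; rewrite mul0r.
  - have is' : (i : nat) \in gtn (size s) by rewrite inE sz.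
    have js : (j : nat) \in gtn (size s) by rewrite inE sz.
    by rewrite dotvC; have /eqP -> := ps j i js is' gt; rewrite mul0r.
have AAt : A *m A^T = 1%:M by apply: mulmx1C.
exists A; split => //.
apply/seteqP; split => x.
  move=> Kx; exists (A^T *m x).
    move=> i; rewrite mxE.
    have -> : \sum_j A^T i j * x j 0 = \sum_j x j 0 * A j i.
      by apply: eq_bigr => j _; rewrite mxE mulrC.
    by rewrite dotA; apply: Kdot'.
  by rewrite mulmxA AAt mul1mx.
move=> [c c0 <-]; apply: Kdual => // y Ky.
have -> : dotv y (A *m c) = \sum_j c j 0 * dotv y (\col_i A i j).
  rewrite /dotv; under eq_bigr do rewrite mxE mulr_sumr.
  rewrite exchange_big /=; apply: eq_bigr => j _; rewrite mulr_sumr.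
  by apply: eq_bigr => i _; rewrite mxE; ring.
apply: sumr_ge0 => j _; apply: mulr_ge0; first exact: c0.
exact: Kdot'.
Qed.

End IsoCone.
Section Orthant.
Context {R : realType} {m : nat}.
Local Notation V := 'cV[R]_m.
Local Notation O := (@nonneg_orthant R m).

Definition rp (a : R) : R := if 0 <= a then a else 0.

Lemma rp_ge0 a : 0 <= rp a.
Proof. by rewrite /rp; case: ifP => // /negbT; rewrite -ltNge => /ltW. Qed.

Definition posv (x : V) : V := \col_i rp (x i 0).

Lemma orth_cc : convex_cone O.
Proof.
split; first by exists 0 => i; rewrite mxE.
split; first by move=> x y Ox Oy i; rewrite mxE addr_ge0.
by move=> t x t0 Ox i; rewrite mxE mulr_ge0.
Qed.

Lemma orth_sd : self_dual O.
Proof.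
apply/seteqP; split => x.
  by move=> Ox y Oy; apply: sumr_ge0 => i _; rewrite mulr_ge0.
move=> H i; have := H (delta_mx i 0).
have -> : dotv (delta_mx i 0) x = x i 0.
  rewrite /dotv (bigD1 i) //= big1 ?addr0; first by rewrite mxE !eqxx mul1r.
  by move=> j ji; rewrite mxE (negbTE ji) mul0r.
apply => j; rewrite mxE; by case: (_ && _).
Qed.

Lemma posv_proj x : is_proj O x (posv x).
Proof.
apply: (proj_char orth_sd).
- by move=> i; rewrite mxE rp_ge0.
- move=> i; rewrite !mxE /rp; case: ifP => h; first by rewrite subrr.
  by move/negbT: h; rewrite -ltNge sub0r oppr_ge0 => /ltW.
- apply: big1 => i _; rewrite !mxE /rp; case: ifP => h; first by rewrite subrr mulr0.
  by rewrite mul0r.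
Qed.

Lemma orth_closed : closed O.
Proof.
have -> : O = \bigcap_(i in [set: 'I_m]) ((fun x : V => x i 0) @^-1` [set y : R | 0 <= y]).
  by apply/seteqP; split => x H i; [move=> _; apply: H | apply: H].
apply: closed_bigI => i _; apply: preimage_closed; last exact: closed_ge.
by move=> x _; apply: coord_continuous.
Qed.

Local Open Scope convex_scope.
Lemma orth_convex : convex_set O.
Proof.
move=> x y l /set_mem Ox /set_mem Oy; apply/mem_set => i.
have -> : (x <| l |> y) = l%:inum *: x + (1 - l%:inum) *: y by [].
have l0 : 0 <= l%:inum by apply: ge0.
have l1 : l%:inum <= 1 by apply: le1.
have h1 := Ox i; have h2 := Oy i.
by rewrite !mxE; apply: addr_ge0; apply: mulr_ge0 => //; rewrite subr_ge0.
Qed.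

End Orthant.
Section OrthantIso.
Context {R : realType} {m : nat}.
Local Notation V := 'cV[R]_m.
Local Notation O := (@nonneg_orthant R m).

Lemma posv_uniq x p : is_proj O x p -> p = posv x.
Proof. by move=> h; apply: (proj_uniq orth_cc orth_sd _ _ _ h (posv_proj x)). Qed.

Lemma delta_entry (i j : 'I_m) : (delta_mx i 0 : V) j 0 = if j == i then 1 else 0.
Proof. by rewrite mxE eqxx andbT eq_sym; case: (i == j). Qed.

Lemma orthant_iff (L : set V) : proper_cone L ->
  (isotone_proj_set L O <-> is_orthant L).
Proof.
move=> [[[l0 Ll0] [LD LZ]] [Lcl [Lpt Lgen]]].
have L0 : L 0 by rewrite -(scale0r l0); apply: LZ.
split.
  move=> [_ [_ [_ iso]]].
  have isoO : forall x y, L (y - x) -> L (posv y - posv x).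
    by move=> x y h; apply: (iso x y) => //; apply: posv_proj.
  have step : forall l, L l -> forall i, L (l i 0 *: delta_mx i 0).
    move=> l Ll i.
    pose x : V := \col_j (if j == i then `|l j 0| else - `|l j 0|).
    have := isoO x (x + l); rewrite addrC addKr => /(_ Ll).
    suff -> : posv (x + l) - posv x = l i 0 *: delta_mx i 0 by [].
    apply/matrixP => j k; rewrite (ord1 k) !mxE /rp eqxx andbT eq_sym.
    case: (eqVneq i j) => [->|ij] /=.
      rewrite normr_ge0 mulr1.
      have h : 0 <= `|l j 0| + l j 0.
        by have := ler_norm (- l j 0); rewrite normrN; lra.
      by rewrite h; ring.
    rewrite mulr0 oppr_ge0 normr_le0.
    have h : (- `|l j 0| + l j 0 <= 0).
      by rewrite addrC subr_le0 ler_norm.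
    case: ifP => h1; case: ifP => /eqP h2; rewrite ?h2 ?normr0; lra.
  have dentry : forall i j : 'I_m, (delta_mx i 0 : V) j 0 = if j == i then 1 else 0.
    by move=> i j; apply: delta_entry.
  have scaleL : forall (a : R) i, a != 0 -> L (a *: delta_mx i 0) ->
      L ((Num.sg a) *: (delta_mx i 0 : V)).
    move=> a i a0 La.
    have -> : Num.sg a *: (delta_mx i 0 : V) = `|a|^-1 *: (a *: delta_mx i 0).
      rewrite scalerA; congr (_ *: _).
      have [ap|an|a00] := ltrgt0P a.
      - by rewrite gtr0_sg // mulVf // gt_eqF.
      - by rewrite ltr0_sg // invrN mulNr mulVf // lt_eqF.
      - by rewrite a00 eqxx in a0.
    by apply: LZ => //; rewrite invr_ge0.
  pose eps i : R := if pselect (exists l, L l /\ 0 < l i 0) then 1 else -1.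
  have Leps : forall i, L (eps i *: delta_mx i 0).
    move=> i; rewrite /eps; case: pselect => [[l [Ll lp]]|nl].
      have := scaleL _ i (lt0r_neq0 lp) (step l Ll i).
      by rewrite gtr0_sg.
    have [a [b [La [Lb e]]]] := Lgen (delta_mx i 0).
    have hab : a i 0 - b i 0 = 1 by have := dentry i i; rewrite eqxx e !mxE.
    have ha : a i 0 <= 0.
      by rewrite leNgt; apply/negP => ap; apply: nl; exists a.
    have bn : b i 0 < 0 by lra.
    have := scaleL _ i (ltr0_neq0 bn) (step b Lb i).
    by rewrite ltr0_sg.
  have epsv : forall i, eps i = 1 \/ eps i = -1.
    by move=> i; rewrite /eps; case: pselect; [left | right].
  have Lsign : forall l, L l -> forall i, 0 <= eps i * l i 0.
    move=> l Ll i; have Ld := Leps i; rewrite /eps in Ld *; case: pselect Ld => [ex|nl] Ld.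
      rewrite mul1r leNgt; apply/negP => ln.
      have := scaleL _ i (ltr0_neq0 ln) (step l Ll i); rewrite ltr0_sg // => Lnd.
      have := Lpt _ Ld; rewrite scale1r -[- delta_mx i 0]scaleN1r => /(_ Lnd) /matrixP /(_ i 0).
      by rewrite dentry eqxx mxE => /eqP; rewrite oner_eq0.
    rewrite mulN1r oppr_ge0 leNgt; apply/negP => lp; exact: (nl (ex_intro _ l (conj Ll lp))).
  exists eps; split => //.
  apply/seteqP; split => x; first by move=> Lx i; apply: Lsign.
  move=> H.
  rewrite (matrix_sum_delta x); apply: big_ind => //.
  move=> i _; rewrite big_ord1.
  have -> : x i 0 *: delta_mx i 0 = (eps i * x i 0) *: (eps i *: (delta_mx i 0 : V)).
    rewrite scalerA; congr (_ *: _).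
    by case: (epsv i) => ->; ring.
  by apply: LZ; [apply: H | apply: Leps].
move=> [eps [epsv Leq]].
split; first by exists 0 => i; rewrite mxE.
split; first exact: orth_closed.
split; first exact: orth_convex.
move=> x y px py; rewrite /cle Leq => hxy /posv_uniq -> /posv_uniq -> i.
have := hxy i; rewrite !mxE /rp.
by case: (epsv i) => ->; case: ifP => h1; case: ifP => h2; lra.
Qed.

End OrthantIso.
Section Final.
Context {R : realType} {m : nat}.
Local Notation V := 'cV[R]_m.

Lemma interior_dir {K : set V} {u} : K° u ->
  forall z : V, exists2 eps : R, 0 < eps & K (u + eps *: z).
Proof.
move=> /nbhs_ballP [e /= e0 sub] z.
have nz := normr_ge0 z.
have d0 : 0 < 2 * (`|z| + 1) by lra.
exists (e / (2 * (`|z| + 1))); first by rewrite divr_gt0.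
apply: sub; rewrite -ball_normE /ball_ /= opprD addrA subrr sub0r normrN normrZ.
rewrite ger0_norm ?divr_ge0 ?ltW // mulrAC ltr_pdivrMr //.
nra.
Qed.

Lemma part1 (K L : set V) : convex_cone K -> self_dual K -> proper_cone L ->
  isotone_proj_set L K ->
  ((K° `&` L) !=set0 \/ (K° `&` dual_cone L) !=set0) ->
  exists A : 'M[R]_m, orthogonal_mx A /\ K = (mulmx A) @` @nonneg_orthant R m.
Proof.
move=> Kcc Ksd [[_ [LD LZ]] [_ [Lpt Lgen]]] [_ [Kcl [_ iso]]] hint.
have K0' := K0 Kcc.
have proj0 : forall w, K w -> is_proj K (- w) 0.
  move=> w Kw; apply: (proj_char Ksd) => //; first by rewrite sub0r opprK.
  by rewrite dotv0l.
have projid : forall k, K k -> is_proj K k k.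
  move=> k Kk; apply: (proj_char Ksd) => //; first by rewrite subrr.
  by rewrite subrr dotv0r.
have LK : L = K.
  case: hint => [[u [Ku Lu]]|[u [Ku Lu]]].
  - have KL : K `<=` L.
      move=> k Kk; have [eps e0 h] := interior_dir Ku (- k).
      pose w := eps^-1 *: (u + eps *: - k).
      have Kw : K w by apply: (KZ Kcc) => //; rewrite invr_ge0 ltW.
      have hw : w = eps^-1 *: u - k.
        by rewrite /w scalerDr scalerA mulVf ?gt_eqF // scale1r.
      have := iso (- w) k 0 k _ (proj0 w Kw) (projid k Kk).
      rewrite /cle subr0; apply.
      rewrite opprK hw; have -> : k + (eps^-1 *: u - k) = eps^-1 *: u by mxring.
      by apply: LZ => //; rewrite invr_ge0 ltW.
    apply/seteqP; split => // l Ll.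
    have [p pp] := proj_exists K Kcl K0' (- l).
    have [Kp Kpl _] := proj_props Kcc Ksd _ _ pp.
    have := iso (- l) 0 p 0; rewrite /cle sub0r opprK => /(_ Ll pp (projid 0 K0')).
    rewrite sub0r => Lnp.
    have p0 : p = 0 by apply: Lpt => //; apply: KL.
    by move: Kpl; rewrite p0 sub0r opprK.
  - have uK : K u by apply: nbhs_singleton.
    have LsK : L `<=` K.
      move=> l Ll.
      have [p pp] := proj_exists K Kcl K0' (- l).
      have [Kp Kpl _] := proj_props Kcc Ksd _ _ pp.
      have := iso (- l) 0 p 0; rewrite /cle sub0r opprK => /(_ Ll pp (projid 0 K0')).
      rewrite sub0r => Lnp.
      have h1 := Lu _ Lnp; rewrite dotvNl oppr_ge0 in h1.
      have h2 := Kdot Ksd Kp uK.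
      have p0 : p = 0.
        apply: contrapT => p0.
        have [eps e0 h] := interior_dir Ku (- p).
        have := Kdot Ksd Kp h; rewrite dotvDr dotvZr dotvNr.
        have := dotv_gt0 p0; nra.
      by move: Kpl; rewrite p0 sub0r opprK.
    apply/seteqP; split => // k Kk.
    have [a [b [La [Lb e]]]] := Lgen k.
    have := iso (- b) k 0 k _ (proj0 b (LsK b Lb)) (projid k Kk).
    rewrite /cle subr0; apply.
    by rewrite opprK e subrK.
rewrite LK in iso.
exact: (K_orthant K Kcc Ksd Kcl iso).
Qed.

End Final.

Theorem corollary1 (R : realType) (m : nat) :
  (forall K L : set 'cV[R]_m,
      convex_cone K -> self_dual K -> proper_cone L ->
      isotone_proj_set L K ->
      ((K° `&` L) !=set0 \/ (K° `&` dual_cone L) !=set0) ->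
      exists A : 'M[R]_m, orthogonal_mx A /\ K = (mulmx A) @` @nonneg_orthant R m)
  /\
  (forall L : set 'cV[R]_m, proper_cone L ->
      (isotone_proj_set L (@nonneg_orthant R m) <-> is_orthant L)).
Proof.
split; first exact: part1.
exact: orthant_iff.
Qed.
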